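(* Let $m\ge6$ be even, $t=m/2$, and $s$ an integer with $2\le s\le 2^{t-1}$. Let $E_1,\dots,E_\alpha$ be a partial spread in $\mathbb{F}_2^m$ and $A,B\subseteq\{1,\dots,\alpha\}$ with $|A|=|B|=s$ and $|A\cap B|=1$. Let $f=\sum_{i\in A}f_i$, $g=\sum_{i\in B}f_i$, and $F=\{f,g,f+g\}$. Then for every nonzero $\mathbf{h}\in\mathbb{F}_2^m$ and all $f_1,f_2\in F$ with $f_1\neq f_2$, \[\widehat{f_1}(\mathbf{h})+\widehat{f_2}(\mathbf{h})-\widehat{f_1+f_2}(\mathbf{0})\neq 2^m\quad\text{and}\quad \widehat{f_1}(\mathbf{h})+\widehat{f_2}(\mathbf{0})-\widehat{f_1+f_2}(\mathbf{h})\neq 2^m.\]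
   Context: A partial spread in $\mathbb{F}_2^m$ ($m=2t$) is a set of subspaces $E_1,\dots,E_\alpha$ of $\mathbb{F}_2^m$, each of dimension $t$, with $E_i\cap E_j=\{\mathbf{0}\}$ for $i\ne j$. $f_i:\mathbb{F}_2^m\to\mathbb{F}_2$ is the indicator function of $E_i\setminus\{\mathbf{0}\}$; sums of Boolean functions are mod 2. For a Boolean function $h$, $\widehat{h}(\mathbf{w})=\sum_{\mathbf{x}\in\mathbb{F}_2^m}(-1)^{h(\mathbf{x})+\mathbf{w}\cdot\mathbf{x}}$ with the standard inner product. *)

(* Defs.v *)
From HB Require Import structures.
From mathcomp Require Import all_boot all_order all_algebra all_fingroup.
Set Implicit Arguments. Unset Strict Implicit. Unset Printing Implicit Defensive.
Import GRing.Theory Num.Theory.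
Local Open Scope ring_scope.

(* Vectors of F_2^m are row vectors 'rV['F_2]_m; subspaces are represented
   by (row spaces of) square matrices 'M['F_2]_m. *)
Notation vec m := 'rV['F_2]_m.

Definition dotF2 (m : nat) (w x : vec m) : 'F_2 := (w *m x^T) 0 0.

Definition sgnF2 (b : 'F_2) : int := if b == 0 then 1 else -1.

Definition walsh (m : nat) (h : vec m -> 'F_2) (w : vec m) : int :=
  \sum_(x : vec m) sgnF2 (h x + dotF2 w x).

Definition partial_spread (m t alpha : nat) (E : 'I_alpha -> 'M['F_2]_m) : Prop :=
  (forall i, \rank (E i) = t) /\
  (forall i j, i != j -> (E i :&: E j)%MS = 0).

Definition ind_nz (m : nat) (E : 'M['F_2]_m) (x : vec m) : 'F_2 :=
  if (x <= E)%MS && (x != 0) then 1 else 0.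

Definition sum_ind (m alpha : nat) (E : 'I_alpha -> 'M['F_2]_m) (A : {set 'I_alpha})
  (x : vec m) : 'F_2 := \sum_(i in A) ind_nz (E i) x.

Definition addF (m : nat) (f g : vec m -> 'F_2) : vec m -> 'F_2 := fun x => f x + g x.

(* Main.v *)
Require Import Defs.
From HB Require Import structures.
From mathcomp Require Import all_boot all_order all_algebra all_fingroup zify.
Import GRing.Theory Num.Theory.
Local Open Scope ring_scope.

Lemma F2_cases (a : 'F_2) : a = 0 \/ a = 1.
Proof. by case: a => [[|[|n]] //= Hn]; [left|right]; apply/val_inj. Qed.

Lemma sgnD (a b : 'F_2) : sgnF2 (a + b) = sgnF2 a * sgnF2 b.
Proof. by case: (F2_cases a) => ->; case: (F2_cases b) => ->. Qed.

Lemma dotD (m : nat) (w x y : vec m) : dotF2 w (x + y) = dotF2 w x + dotF2 w y.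
Proof. by rewrite /dotF2 linearD /= mulmxDr mxE. Qed.

Lemma dot0 (m : nat) (w : vec m) : dotF2 w 0 = 0.
Proof. by rewrite /dotF2 trmx0 mulmx0 mxE. Qed.

Lemma card_row (m : nat) (E : 'M['F_2]_m) :
  #|[pred x : vec m | (x <= E)%MS]| = (2 ^ \rank E)%N.
Proof.
have inj := row_free_inj (m := 1) (row_base_free E).
have -> : #|[pred x : vec m | (x <= E)%MS]| = #|codom (fun y : 'rV['F_2]_(\rank E) => y *m row_base E)|.
  apply: eq_card => x; rewrite !inE -(eq_row_base E).
  apply/idP/idP.
    move=> H. case/submxP: H => D ->. by apply/codomP; exists D.
  by case/codomP => D ->; apply/submxP; exists D.
rewrite (card_codom inj) card_mx. rewrite card_Fp //. by rewrite mul1n.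
Qed.

Lemma vv (m : nat) (v : vec m) : v + v = 0.
Proof. apply/matrixP => i j; rewrite !mxE; by case: (F2_cases (v i j)) => ->; apply/eqP. Qed.

Definition mult (P X : int) := exists k : int, X = P * k.

Lemma char_sum (m : nat) (E : 'M['F_2]_m) (w : vec m) :
  let S := \sum_(x : vec m | (x <= E)%MS) sgnF2 (dotF2 w x) in
  S = 0 \/ S = (2 ^ \rank E)%:Z.
Proof.
move=> S.
case: (pickP [pred e : vec m | (e <= E)%MS && (dotF2 w e == 1)]) => [e /andP[eE /eqP de]|none].
  left.
  have : S = - S.
    rewrite {1}/S (reindex_inj (addIr e)) /= /S -sumrN.
    apply: eq_big => x.
      by apply/idP/idP => H; [have -> : x = (x + e) + e by rewrite -addrA vv addr0 | ]; exact: addmx_sub.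
    by move=> _; rewrite dotD de sgnD /sgnF2; case: (_ == 0).
  lia.
right.
rewrite /S (eq_bigr (fun _ => 1)) ?sumr_const; last first.
  move=> x xE; have := none x; rewrite /= xE /=.
  by case: (F2_cases (dotF2 w x)) => ->.
rewrite -card_row.
by rewrite -natz.
Qed.

Definition nz (m : nat) (E : 'M['F_2]_m) (x : vec m) : bool := (x <= E)%MS && (x != 0).
Arguments nz {m}.

Section Spread.
Variables (m alpha : nat) (E : 'I_alpha -> 'M['F_2]_m).
Hypothesis disj : forall i j, i != j -> (E i :&: E j)%MS = 0.

Lemma nz_uniq i j x : j != i -> nz (E i) x -> ~~ nz (E j) x.
Proof.
move=> ij /andP[xi x0]; apply/negP => /andP[xj _].
have : (x <= E i :&: E j)%MS by rewrite sub_capmx xi xj.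
by rewrite disj 1?eq_sym // submx0 (negbTE x0).
Qed.

Lemma sgn_sum_ind (S : {set 'I_alpha}) x :
  sgnF2 (sum_ind E S x) = 1 - 2 * \sum_(i in S) ((nz (E i) x)%:R : int).
Proof.
rewrite /sum_ind.
case: (pickP [pred i | (i \in S) && nz (E i) x]) => [i /andP[iS nzi]|none].
  rewrite (bigD1 i iS) [X in _ = 1 - 2 * X](bigD1 i iS) /= nzi.
  rewrite big1 => [|j /andP[_ ji]]; last by have := nz_uniq _ _ _ ji nzi; rewrite /nz /ind_nz => /negbTE ->.
  rewrite big1 => [|j /andP[_ ji]]; last by rewrite (negbTE (nz_uniq _ _ _ ji nzi)).
  by rewrite /ind_nz -/(nz _ _) nzi addr0.
rewrite big1 => [|j jS]; last by have := none j; rewrite /= jS /ind_nz /= /nz => ->.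
rewrite big1 => [|j jS]; last by have := none j; rewrite /= jS /= => ->.
by rewrite mulr0 subr0.
Qed.

Definition sigma (E0 : 'M['F_2]_m) (w : vec m) : int :=
  \sum_(x : vec m | (x <= E0)%MS) sgnF2 (dotF2 w x).

Lemma sigma_nz (E0 : 'M['F_2]_m) w :
  \sum_(x : vec m) (nz E0 x)%:R * sgnF2 (dotF2 w x) = sigma E0 w - 1.
Proof.
rewrite /sigma [in RHS](bigD1 0) ?sub0mx //= dot0 /= addrC addrK.
rewrite [RHS]big_mkcond /=; apply: eq_bigr => x _.
by rewrite /nz; case: ifP => _; rewrite ?mul1r ?mul0r.
Qed.

Lemma walsh_sum_ind S w :
  walsh (sum_ind E S) w = sigma 1%:M w - 2 * \sum_(i in S) (sigma (E i) w - 1).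
Proof.
rewrite /walsh.
under eq_bigr => x _ do rewrite sgnD sgn_sum_ind mulrBl mul1r.
rewrite sumrB; congr (_ - _).
  by rewrite /sigma; apply: eq_bigl => x; rewrite submx1.
under eq_bigr => x _ do rewrite -mulrA mulr_suml.
rewrite -mulr_sumr; congr (_ * _).
rewrite exchange_big /=; apply: eq_bigr => i _.
exact: sigma_nz.
Qed.

Lemma key (t : nat) (S : {set 'I_alpha}) w :
  (1 <= t)%N -> m = (2 * t)%N -> (forall i, \rank (E i) = t) ->
  exists k : int, walsh (sum_ind E S) w - 2 * #|S|%:Z = 2 * (2 ^ t)%:Z * k.
Proof.
move=> t1 mt rk.
rewrite walsh_sum_ind sumrB sumr_const.
have [k1 h1] : exists k1 : int, sigma 1%:M w = 2 * (2 ^ t)%:Z * k1.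
  case: (char_sum _ (1%:M : 'M_m) w) => /= h; rewrite /sigma h.
    by exists 0; rewrite mulr0.
  exists (2 ^ (t - 1))%:Z; rewrite mxrank1.
  have e : (2 ^ m = 2 * 2 ^ t * 2 ^ (t - 1))%N.
    by rewrite -expnS -expnD mt; congr (2 ^ _)%N; lia.
  rewrite e !PoszM. done.
have [k2 h2] : exists k2 : int, \sum_(i in S) sigma (E i) w = (2 ^ t)%:Z * k2.
  apply: (big_ind (fun x : int => exists k : int, x = (2 ^ t)%:Z * k)).
  - by exists 0; rewrite mulr0.
  - by move=> x y [kx ->] [ky ->]; exists (kx + ky); rewrite mulrDr.
  move=> i _; case: (char_sum _ (E i) w) => /= h; rewrite /sigma h.
    by exists 0; rewrite mulr0.
  by exists 1; rewrite mulr1 rk.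
exists (k1 - k2); rewrite h1 h2 -natz.
lia.
Qed.

End Spread.

Lemma F2_add_sub (a b : 'F_2) : a + (a + b) = b.
Proof. by case: (F2_cases a) => ->; case: (F2_cases b) => ->; apply/eqP. Qed.

Lemma F2_xx (a : 'F_2) : a + a = 0.
Proof. by case: (F2_cases a) => ->; apply/eqP. Qed.

Lemma sum_ind_sym (m alpha : nat) (E : 'I_alpha -> 'M['F_2]_m) (A B : {set 'I_alpha}) x :
  sum_ind E A x + sum_ind E B x = sum_ind E ((A :\: B) :|: (B :\: A)) x.
Proof.
rewrite /sum_ind (big_setID B) [X in _ + X](big_setID A) [RHS](big_setID (A :\: B)) /=.
have -> : (A :\: B :|: B :\: A) :&: (A :\: B) = A :\: B.
  by apply/setP => i; rewrite !inE; case: (i \in A); case: (i \in B).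
have -> : (A :\: B :|: B :\: A) :\: (A :\: B) = B :\: A.
  by apply/setP => i; rewrite !inE; case: (i \in A); case: (i \in B).
rewrite [B :&: A]setIC.
move: (\sum_(i in A :&: B) _) (\sum_(i in A :\: B) _) (\sum_(i in B :\: A) _) => a b c.
by case: (F2_cases a) => ->; case: (F2_cases b) => ->; case: (F2_cases c) => ->; apply/eqP.
Qed.

Lemma walsh_ext (m : nat) (F G : vec m -> 'F_2) w : F =1 G -> walsh F w = walsh G w.
Proof. by move=> FG; rewrite /walsh; apply: eq_bigr => x _; rewrite FG. Qed.
Lemma fin (W1 W2 W3 k1 k2 k3 Q R : int) (a b c d : nat) :
  W1 - 2 * a%:Z = 2 * Q * k1 -> W2 - 2 * b%:Z = 2 * Q * k2 -> W3 - 2 * c%:Z = 2 * Q * k3 ->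
  (a + b = c + d)%N -> (0 < d)%N -> d%:Z < Q -> W1 + W2 - W3 = 2 * Q * R -> False.
Proof.
move=> h1 h2 h3 e d0 dQ h.
have : d%:Z = Q * (R - k1 - k2 + k3) by lia.
set K := R - k1 - k2 + k3 => hd.
have Q0 : 0 < Q by lia.
have [K0|K1] : (K <= 0) \/ (1 <= K) by lia.
  have : Q * K <= 0 by rewrite pmulr_rle0.
  lia.
have : Q <= Q * K by rewrite ler_peMr // Order.POrderTheory.ltW.
lia.
Qed.

Lemma finish (m t alpha : nat) (E : 'I_alpha -> 'M['F_2]_m)
  (disj : forall i j, i != j -> (E i :&: E j)%MS = 0)
  (rk : forall i, \rank (E i) = t) (t1 : (1 <= t)%N) (mt : m = (2 * t)%N)
  (X Y Z : {set 'I_alpha}) (F1 F2 : vec m -> 'F_2) (d : nat) (h : vec m) :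
  F1 =1 sum_ind E X -> F2 =1 sum_ind E Y -> addF F1 F2 =1 sum_ind E Z ->
  (#|X| + #|Y| = #|Z| + d)%N -> (0 < d)%N -> (d < 2 ^ t)%N ->
  walsh F1 h + walsh F2 h - walsh (addF F1 F2) 0 != (2 ^ m)%:Z /\
  walsh F1 h + walsh F2 0 - walsh (addF F1 F2) h != (2 ^ m)%:Z.
Proof.
move=> e1 e2 e3 card d0 dt.
rewrite !(walsh_ext _ _ _ _ e1) !(walsh_ext _ _ _ _ e2) !(walsh_ext _ _ _ _ e3).
have em : (2 ^ m)%:Z = 2 * (2 ^ t)%:Z * (2 ^ (t - 1))%:Z.
  have e : (2 ^ m = 2 * 2 ^ t * 2 ^ (t - 1))%N.
    by rewrite -expnS -expnD mt; congr (2 ^ _)%N; lia.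
  by rewrite e !PoszM.
have dQ : d%:Z < (2 ^ t)%:Z by rewrite ltz_nat.
split; apply/eqP => H.
  have [k1 h1] := key _ _ _ disj _ X h t1 mt rk.
  have [k2 h2] := key _ _ _ disj _ Y h t1 mt rk.
  have [k3 h3] := key _ _ _ disj _ Z 0 t1 mt rk.
  by apply: (fin _ _ _ _ _ _ _ _ _ _ _ _ h1 h2 h3 card d0 dQ); rewrite H em.
have [k1 h1] := key _ _ _ disj _ X h t1 mt rk.
have [k2 h2] := key _ _ _ disj _ Y 0 t1 mt rk.
have [k3 h3] := key _ _ _ disj _ Z h t1 mt rk.
by apply: (fin _ _ _ _ _ _ _ _ _ _ _ _ h1 h2 h3 card d0 dQ); rewrite H em.
Qed.

Theorem lemma6 (m t s alpha : nat) (E : 'I_alpha -> 'M['F_2]_m)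
  (A B : {set 'I_alpha}) :
  (6 <= m)%N -> m = (2 * t)%N ->
  (2 <= s)%N -> (s <= 2 ^ (t - 1))%N ->
  partial_spread t E ->
  #|A| = s -> #|B| = s -> #|A :&: B| = 1%N ->
  let f := sum_ind E A in
  let g := sum_ind E B in
  forall (h : vec m), h != 0 ->
  forall f1 f2 : vec m -> 'F_2,
    (f1 = f \/ f1 = g \/ f1 = addF f g) ->
    (f2 = f \/ f2 = g \/ f2 = addF f g) ->
    f1 <> f2 ->
    walsh f1 h + walsh f2 h - walsh (addF f1 f2) 0 != (2 ^ m)%:Z /\
    walsh f1 h + walsh f2 0 - walsh (addF f1 f2) h != (2 ^ m)%:Z.
Proof.
move=> m6 mt s2 sst [rk disj] cA cB cAB f g h _ f1 f2 H1 H2 ne.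
have t1 : (1 <= t)%N by lia.
have eP : (2 ^ t = 2 * 2 ^ (t - 1))%N by rewrite -expnS; congr (2 ^ _)%N; lia.
set C := (A :\: B) :|: (B :\: A).
have eC : forall x, addF f g x = sum_ind E C x by move=> x; exact: sum_ind_sym.
have cC : #|C| = (2 * s - 2)%N.
  rewrite cardsU !cardsD cA cB cAB [B :&: A]setIC cAB.
  have -> : (A :\: B) :&: (B :\: A) = set0.
    by apply/setP => i; rewrite !inE; case: (i \in A); case: (i \in B).
  rewrite cards0; lia.
have d1 : (0 < 2)%N by [].
have d2 : (0 < 2 * s - 2)%N by lia.
have dt1 : (2 < 2 ^ t)%N by lia.
have dt2 : (2 * s - 2 < 2 ^ t)%N by lia.
move: ne; case: H1 => [->|[->|->]]; case: H2 => [->|[->|->]] => ne; try by case: ne.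
- apply: (finish _ _ _ _ disj rk t1 mt A B C _ _ 2 h);
    solve [ done | move=> x; done | exact: eC | rewrite cA cB cC; lia  ].
- apply: (finish _ _ _ _ disj rk t1 mt A C B _ _ (2 * s - 2) h);
    solve [ done | move=> x; done | exact: eC | rewrite cA cB cC; lia | move=> x; rewrite /addF F2_add_sub // ].
- apply: (finish _ _ _ _ disj rk t1 mt B A C _ _ 2 h);
    solve [ done | move=> x; done | exact: eC | rewrite cA cB cC; lia | move=> x; rewrite /addF addrC; exact: eC ].
- apply: (finish _ _ _ _ disj rk t1 mt B C A _ _ (2 * s - 2) h);
    solve [ done | move=> x; done | exact: eC | rewrite cA cB cC; lia | move=> x; rewrite /addF addrCA F2_xx addr0 // ].
- apply: (finish _ _ _ _ disj rk t1 mt C A B _ _ (2 * s - 2) h);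
    solve [ done | move=> x; done | exact: eC | rewrite cA cB cC; lia | move=> x; rewrite /addF addrAC F2_xx add0r // ].
- apply: (finish _ _ _ _ disj rk t1 mt C B A _ _ (2 * s - 2) h);
    solve [ done | move=> x; done | exact: eC | rewrite cA cB cC; lia | move=> x; rewrite /addF -addrA F2_xx addr0 // ].
Qed.
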